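(* Let $(\mathbf{x}_t,\mathbf{z}_t,\mathbf{y}_t)_{t\ge0}$ be generated by generalized Bregman ADMM under the standing assumptions and Assumption 1, with $\mathbf{y}_0=\mathbf{0}$. Let $\bar{\mathbf{x}}_T=\frac1T\sum_{t=1}^T\mathbf{x}_t$ and $\bar{\mathbf{z}}_T=\frac1T\sum_{t=1}^T\mathbf{z}_t$. Let $\sigma=\min\{1,m^{\frac{2}{p}-1}\}$, $0<\gamma<\frac{\alpha\sigma}{2}$ and $\tau\le(\alpha\sigma-2\gamma)\rho$. Then for every KKT point $(\mathbf{x}^*,\mathbf{z}^*,\mathbf{y}^* )$ and every $T\ge1$, $$f(\bar{\mathbf{x}}_T)+g(\bar{\mathbf{z}}_T)-(f(\mathbf{x}^* )+g(\mathbf{z}^* ))\le\frac{D_1}{T},\qquad \|\mathbf{A}\bar{\mathbf{x}}_T+\mathbf{B}\bar{\mathbf{z}}_T-\mathbf{c}\|_2^2\le\frac{D(\mathbf{w}^*,\mathbf{w}_0)}{\gamma T},$$ where $D_1=\rho B_\phi(\mathbf{B}\mathbf{z}^*,\mathbf{B}\mathbf{z}_0)+\rho_{\mathbf{x}}B_{\varphi_{\mathbf{x}}}(\mathbf{x}^*,\mathbf{x}_0)+\rho_{\mathbf{z}}B_{\varphi_{\mathbf{z}}}(\mathbf{z}^*,\mathbf{z}_0)$.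
   Context: Problem: $f:\mathbb{R}^{n_1}\to\mathbb{R}\cup\{+\infty\}$ and $g:\mathbb{R}^{n_2}\to\mathbb{R}\cup\{+\infty\}$; $\mathbf{A}\in\mathbb{R}^{m\times n_1}$, $\mathbf{B}\in\mathbb{R}^{m\times n_2}$, $\mathbf{c}\in\mathbb{R}^m$; $\mathcal{X}\subseteq\mathbb{R}^{n_1}$, $\mathcal{Z}\subseteq\mathbb{R}^{n_2}$ convex; the problem is $\min f(\mathbf{x})+g(\mathbf{z})$ s.t. $\mathbf{x}\in\mathcal{X},\mathbf{z}\in\mathcal{Z},\mathbf{A}\mathbf{x}+\mathbf{B}\mathbf{z}=\mathbf{c}$. For a continuously differentiable, strictly convex function $\psi$ on (the relative interior of) a convex set, $B_\psi(\mathbf{u},\mathbf{v})=\psi(\mathbf{u})-\psi(\mathbf{v})-\langle\nabla\psi(\mathbf{v}),\mathbf{u}-\mathbf{v}\rangle\ge 0$. Three such functions are fixed: $\phi$ (on a convex subset of $\mathbb{R}^m$), $\varphi_{\mathbf{x}}$, $\varphi_{\mathbf{z}}$. Generalized Bregman ADMM: given $(\mathbf{x}_0,\mathbf{z}_0,\mathbf{y}_0)$ and parameters $\rho>0,\tau>0,\rho_{\mathbf{x}}\ge0,\rho_{\mathbf{z}}\ge0$, for $t\ge0$: $\mathbf{x}_{t+1}=\arg\min_{\mathbf{x}\in\mathcal{X}} f(\mathbf{x})+\langle\mathbf{y}_t,\mathbf{A}\mathbf{x}+\mathbf{B}\mathbf{z}_t-\mathbf{c}\rangle+\rho B_\phi(\mathbf{c}-\mathbf{A}\mathbf{x},\mathbf{B}\mathbf{z}_t)+\rho_{\mathbf{x}}B_{\varphi_{\mathbf{x}}}(\mathbf{x},\mathbf{x}_t)$;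 $\mathbf{z}_{t+1}=\arg\min_{\mathbf{z}\in\mathcal{Z}} g(\mathbf{z})+\langle\mathbf{y}_t,\mathbf{A}\mathbf{x}_{t+1}+\mathbf{B}\mathbf{z}-\mathbf{c}\rangle+\rho B_\phi(\mathbf{B}\mathbf{z},\mathbf{c}-\mathbf{A}\mathbf{x}_{t+1})+\rho_{\mathbf{z}}B_{\varphi_{\mathbf{z}}}(\mathbf{z},\mathbf{z}_t)$; $\mathbf{y}_{t+1}=\mathbf{y}_t+\tau(\mathbf{A}\mathbf{x}_{t+1}+\mathbf{B}\mathbf{z}_{t+1}-\mathbf{c})$. Standing assumptions: the minimizers exist; all Bregman divergences are evaluated at points where they are defined; and the minimizers satisfy the first-order optimality conditions $-\mathbf{A}^T\{\mathbf{y}_t+\rho(\nabla\phi(\mathbf{B}\mathbf{z}_t)-\nabla\phi(\mathbf{c}-\mathbf{A}\mathbf{x}_{t+1}))\}-\rho_{\mathbf{x}}(\nabla\varphi_{\mathbf{x}}(\mathbf{x}_{t+1})-\nabla\varphi_{\mathbf{x}}(\mathbf{x}_t))\in\partial f(\mathbf{x}_{t+1})$ and $-\mathbf{B}^T\{\mathbf{y}_t+\rho(\nabla\phi(\mathbf{B}\mathbf{z}_{t+1})-\nabla\phi(\mathbf{c}-\mathbf{A}\mathbf{x}_{t+1}))\}-\rho_{\mathbf{z}}(\nabla\varphi_{\mathbf{z}}(\mathbf{z}_{t+1})-\nabla\varphi_{\mathbf{z}}(\mathbf{z}_t))\in\partial g(\mathbf{z}_{t+1})$. Assumption 1: (a)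 $f,g$ are closed, proper, convex; (b) an optimal solution exists; (c) $B_\phi(\mathbf{u},\mathbf{v})\ge\frac{\alpha}{2}\|\mathbf{u}-\mathbf{v}\|_p^2$ for some $\alpha>0$, $p>0$. A KKT point is $(\mathbf{x}^*,\mathbf{z}^*,\mathbf{y}^* )$ with $-\mathbf{A}^T\mathbf{y}^*\in\partial f(\mathbf{x}^* )$, $-\mathbf{B}^T\mathbf{y}^*\in\partial g(\mathbf{z}^* )$, $\mathbf{A}\mathbf{x}^*+\mathbf{B}\mathbf{z}^*=\mathbf{c}$. With $\mathbf{w}_t=(\mathbf{x}_t,\mathbf{z}_t,\mathbf{y}_t)$, $\mathbf{w}^*=(\mathbf{x}^*,\mathbf{z}^*,\mathbf{y}^* )$: $D(\mathbf{w}^*,\mathbf{w}_t)=\frac{1}{2\tau\rho}\|\mathbf{y}^*-\mathbf{y}_t\|_2^2+B_\phi(\mathbf{B}\mathbf{z}^*,\mathbf{B}\mathbf{z}_t)+\frac{\rho_{\mathbf{x}}}{\rho}B_{\varphi_{\mathbf{x}}}(\mathbf{x}^*,\mathbf{x}_t)+\frac{\rho_{\mathbf{z}}}{\rho}B_{\varphi_{\mathbf{z}}}(\mathbf{z}^*,\mathbf{z}_t)$. *)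

(* Defs.v *)
From mathcomp Require Import all_boot.
From Stdlib Require Import Reals.
Open Scope R_scope.

Definition vec (n : nat) := 'I_n -> R.
Definition mat (m n : nat) := 'I_m -> 'I_n -> R.

Definition vsum {n : nat} (F : 'I_n -> R) : R := \big[Rplus/0]_(i < n) F i.
Definition vzero (n : nat) : vec n := fun _ => 0.
Definition vadd {n : nat} (u v : vec n) : vec n := fun i => u i + v i.
Definition vsub {n : nat} (u v : vec n) : vec n := fun i => u i - v i.
Definition vopp {n : nat} (u : vec n) : vec n := fun i => - u i.
Definition vscal {n : nat} (a : R) (u : vec n) : vec n := fun i => a * u i.
Definition inner {n : nat} (u v : vec n) : R := vsum (fun i => u i * v i).
Definition mv {m n : nat} (A : mat m n) (x : vec n) : vec m :=
  fun i => vsum (fun j => A i j * x j).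
Definition mtv {m n : nat} (A : mat m n) (y : vec m) : vec n :=
  fun j => vsum (fun i => A i j * y i).
Definition norm2 {n : nat} (u : vec n) : R := sqrt (inner u u).
(* real power with the convention 0^q = 0 (used for q > 0) *)
Definition rpow (x q : R) : R := if Req_EM_T x 0 then 0 else Rpower x q.
Definition normp {n : nat} (p : R) (u : vec n) : R :=
  rpow (vsum (fun i => rpow (Rabs (u i)) p)) (/ p).
Definition tsum {n : nat} (x : nat -> vec n) (T : nat) : vec n :=
  fun i => \big[Rplus/0]_(1 <= t < T.+1) x t i.
Definition tavg {n : nat} (x : nat -> vec n) (T : nat) : vec n :=
  vscal (/ INR T) (tsum x T).

Inductive ereal := Fin (r : R) | PInf.
Definition ele (a b : ereal) : Prop :=
  match a, b with
  | _, PInf => True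
  | PInf, Fin _ => False
  | Fin x, Fin y => x <= y
  end.
Definition eadd (a b : ereal) : ereal :=
  match a, b with Fin x, Fin y => Fin (x + y) | _, _ => PInf end.
Definition eaddr (a : ereal) (r : R) : ereal :=
  match a with Fin x => Fin (x + r) | PInf => PInf end.
Definition egtr (a : ereal) (r : R) : Prop :=
  match a with Fin x => r < x | PInf => True end.

Definition convex_set {n : nat} (S : vec n -> Prop) : Prop :=
  forall u v l, S u -> S v -> 0 <= l <= 1 ->
    S (vadd (vscal l u) (vscal (1 - l) v)).

Definition econvex {n : nat} (f : vec n -> ereal) : Prop :=
  forall u v a b l, f u = Fin a -> f v = Fin b -> 0 <= l <= 1 ->
    ele (f (vadd (vscal l u) (vscal (1 - l) v))) (Fin (l * a + (1 - l) * b)).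
(* proper: finite somewhere (and never -oo, built into the codomain) *)
Definition eproper {n : nat} (f : vec n -> ereal) : Prop :=
  exists u a, f u = Fin a.
(* closed = lower semicontinuous everywhere *)
Definition eclosed {n : nat} (f : vec n -> ereal) : Prop :=
  forall u r, egtr (f u) r ->
    exists d, d > 0 /\ forall v, norm2 (vsub v u) < d -> egtr (f v) r.
Definition subgrad {n : nat} (f : vec n -> ereal) (u s : vec n) : Prop :=
  exists a, f u = Fin a /\
    forall v, ele (Fin (a + inner s (vsub v u))) (f v).

(* psi : C -> R continuously differentiable and strictly convex, with gradient
   gpsi available on D (the (relative) interior of C, D subset of C). *)
Definition bregman_generator {n : nat} (C D : vec n -> Prop)
    (psi : vec n -> R) (gpsi : vec n -> vec n) : Prop :=
  convex_set C /\ convex_set D /\ (forall v, D v -> C v) /\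
  (forall u v l, C u -> C v -> u <> v -> 0 < l < 1 ->
     psi (vadd (vscal l u) (vscal (1 - l) v)) < l * psi u + (1 - l) * psi v) /\
  (forall v u eps, D v -> C u -> eps > 0 -> exists del, del > 0 /\
     forall h, 0 < h < del ->
       Rabs ((psi (vadd v (vscal h (vsub u v))) - psi v) / h
             - inner (gpsi v) (vsub u v)) < eps) /\
  (forall v eps, D v -> eps > 0 -> exists del, del > 0 /\
     forall w, D w -> norm2 (vsub w v) < del ->
       norm2 (vsub (gpsi w) (gpsi v)) < eps).

Definition breg {n : nat} (psi : vec n -> R) (gpsi : vec n -> vec n)
    (u v : vec n) : R :=
  psi u - psi v - inner (gpsi v) (vsub u v).

Definition admm_x_obj {n1 n2 m : nat} (f : vec n1 -> ereal)
    (A : mat m n1) (B : mat m n2) (c : vec m)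
    (phi : vec m -> R) (gphi : vec m -> vec m)
    (phx : vec n1 -> R) (gphx : vec n1 -> vec n1)
    (rho rhox : R) (xt : vec n1) (zt : vec n2) (yt : vec m) (x : vec n1) : ereal :=
  eaddr (f x)
    (inner yt (vsub (vadd (mv A x) (mv B zt)) c)
     + rho * breg phi gphi (vsub c (mv A x)) (mv B zt)
     + rhox * breg phx gphx x xt).

Definition admm_z_obj {n1 n2 m : nat} (g : vec n2 -> ereal)
    (A : mat m n1) (B : mat m n2) (c : vec m)
    (phi : vec m -> R) (gphi : vec m -> vec m)
    (phz : vec n2 -> R) (gphz : vec n2 -> vec n2)
    (rho rhoz : R) (xt1 : vec n1) (zt : vec n2) (yt : vec m) (z : vec n2) : ereal :=
  eaddr (g z)
    (inner yt (vsub (vadd (mv A xt1) (mv B z)) c)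
     + rho * breg phi gphi (mv B z) (vsub c (mv A xt1))
     + rhoz * breg phz gphz z zt).

(* Main.v *)
From HB Require Import structures.
Require Import Defs.
From mathcomp Require Import all_boot.
From Stdlib Require Import Reals Lra Lia FunctionalExtensionality.
Open Scope R_scope.
Set Implicit Arguments.

HB.instance Definition _ := Monoid.isComLaw.Build R 0 Rplus (fun a b c => esym (Rplus_assoc a b c)) Rplus_comm Rplus_0_l.

Lemma vsumD n (F G : 'I_n -> R) : vsum (fun i => F i + G i) = vsum F + vsum G.
Proof. by rewrite /vsum big_split. Qed.

Lemma vsumZ n a (F : 'I_n -> R) : vsum (fun i => a * F i) = a * vsum F.
Proof.
rewrite /vsum; apply: (big_rec2 (fun x y => x = a * y)); first by ring.
by move=> i x y _ ->; ring.
Qed.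

Lemma vsum0 n : vsum (fun _ : 'I_n => 0) = 0.
Proof. by rewrite /vsum big1. Qed.

Lemma vsum_ext n (F G : 'I_n -> R) : (forall i, F i = G i) -> vsum F = vsum G.
Proof. by move=> H; rewrite /vsum; apply: eq_bigr => i _; apply H. Qed.

Lemma vsum_le n (F G : 'I_n -> R) : (forall i, F i <= G i) -> vsum F <= vsum G.
Proof.
move=> H; rewrite /vsum; apply: (big_rec2 (fun x y => x <= y)); first lra.
by move=> i x y _ Hxy; have := H i; lra.
Qed.

Lemma vsum_ge0 n (F : 'I_n -> R) : (forall i, 0 <= F i) -> 0 <= vsum F.
Proof. by move=> H; rewrite -(vsum0 n); apply vsum_le. Qed.

Lemma vsum_swap m n (F : 'I_m -> 'I_n -> R) :
  vsum (fun i => vsum (fun j => F i j)) = vsum (fun j => vsum (fun i => F i j)).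
Proof. by rewrite /vsum exchange_big. Qed.

Lemma vsum_term_le n (F : 'I_n -> R) i : (forall j, 0 <= F j) -> F i <= vsum F.
Proof.
move=> H; rewrite /vsum (bigD1 i) //=; set s := (X in _ <= _ + X).
have: 0 <= s.
  by apply: (big_ind (fun x => 0 <= x)) => //; [lra | move=> x y; lra].
lra.
Qed.

Lemma vsum_eq0 n (F : 'I_n -> R) : (forall j, 0 <= F j) -> vsum F = 0 -> forall i, F i = 0.
Proof.
move=> H H0 i; have := vsum_term_le F i H; have := H i; lra.
Qed.


Lemma rpow_pos x q : 0 < x -> rpow x q = Rpower x q.
Proof. move=> H; rewrite /rpow; case: Req_EM_T => // E; lra. Qed.
Lemma rpow_0 q : rpow 0 q = 0.
Proof. rewrite /rpow; case: Req_EM_T => // E; lra. Qed.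

Lemma Rpower_pos x q : 0 < Rpower x q.
Proof. rewrite /Rpower; apply exp_pos. Qed.

Lemma bern x q : 0 < x -> 1 <= q -> 1 + q * (x - 1) <= Rpower x q.
Proof.
move=> Hx Hq; rewrite /Rpower; set L := ln x.
have ex : exp L = x by apply exp_ln.
have e1 : exp (q * L) = exp L * exp ((q - 1) * L) by rewrite -exp_plus; f_equal; ring.
have h1 := exp_ineq1_le ((q - 1) * L).
have h2 := exp_ineq1_le (- L).
have eL := exp_pos L.
have h3 : exp (-L) * exp L = 1 by rewrite -exp_plus; replace (-L + L) with 0 by ring; apply exp_0.
have h4 : exp L * (1 - L) <= 1.
  have : exp L * (1 - L) <= exp L * exp (- L) by apply Rmult_le_compat_l; lra.
  lra.
rewrite e1 -ex.
have : exp L * (1 + (q - 1) * L) <= exp L * exp ((q - 1) * L) by apply Rmult_le_compat_l; lra.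
have : 0 <= (q - 1) * (1 - exp L * (1 - L)) by apply Rmult_le_pos; lra.
nra.
Qed.

Lemma tangent w M q : 0 < M -> 0 <= w -> 1 <= q ->
  Rpower M q + q * Rpower M (q - 1) * (w - M) <= rpow w q.
Proof.
move=> HM Hw Hq.
have eM : Rpower M (q - 1) * M = Rpower M q.
  rewrite -{2}(Rpower_1 M HM) -Rpower_plus; f_equal; ring.
have pM := Rpower_pos M q.
case: (Req_dec w 0) => [->|Hw0].
  rewrite rpow_0; nra.
have Hw' : 0 < w by lra.
rewrite rpow_pos //.
have ew : w = M * (w / M) by field; lra.
have Hx : 0 < w / M by apply Rdiv_lt_0_compat.
rewrite [in Rpower w q]ew -Rpower_mult_distr //.
have := bern Hx Hq.
have pM1 := Rpower_pos M (q - 1).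
have : q * Rpower M (q - 1) * (w - M) = Rpower M q * (q * (w / M - 1)).
  rewrite -eM; field; lra.
move=> ->.
move=> hb.
have : Rpower M q * (1 + q * (w / M - 1)) <= Rpower M q * Rpower (w / M) q.
  apply Rmult_le_compat_l; lra.
lra.
Qed.

Lemma vsum_const m k : vsum (fun _ : 'I_m => k) = INR m * k.
Proof.
rewrite /vsum; elim: m => [|m IH]; first by rewrite big_ord0 /=; ring.
by rewrite big_ord_recr S_INR /= IH; ring.
Qed.

Lemma rpow_ge0 x q : 0 <= rpow x q.
Proof. rewrite /rpow; case: (Req_EM_T x 0) => E /=; [lra | apply Rlt_le, Rpower_pos]. Qed.

Lemma sq_abs u : u * u = Rabs u * Rabs u.
Proof. rewrite -Rabs_mult Rabs_pos_eq //; nra. Qed.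

Lemma normp_ge m (u : vec m) p : 0 < p ->
  Rmin 1 (Rpower (INR m) (2 / p - 1)) * inner u u <= normp p u ^ 2.
Proof.
move=> Hp.
set q := p / 2.
have Hq : 0 < q by rewrite /q; lra.
set t := fun i => rpow (Rabs (u i)) p.
set P := vsum t.
set S := inner u u.
have ht : forall i, u i <> 0 -> t i = Rpower (u i * u i) q.
  move=> i Hi; rewrite /t rpow_pos; last by apply Rabs_pos_lt.
  have Ha : 0 < Rabs (u i) by apply Rabs_pos_lt.
  rewrite sq_abs /Rpower ln_mult //; f_equal; rewrite /q; field.
have ht0 : forall i, u i = 0 -> t i = 0.
  by move=> i Hi; rewrite /t Hi Rabs_R0 rpow_0.
have tnn : forall i, 0 <= t i by move=> i; apply rpow_ge0.
have Pnn : 0 <= P by apply vsum_ge0.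
have Snn : 0 <= S by apply vsum_ge0 => i; nra.
have sig1 := Rmin_l 1 (Rpower (INR m) (2 / p - 1)).
have sig2 := Rmin_r 1 (Rpower (INR m) (2 / p - 1)).
set sig := Rmin _ _ in sig1 sig2 *.
case: (Req_dec P 0) => HP0.
  have hu : forall i, u i = 0.
    move=> i; case: (Req_dec (u i) 0) => // Hi.
    have := vsum_eq0 tnn HP0 i; rewrite ht // => E.
    have := Rpower_pos (u i * u i) q; lra.
  have -> : S = 0.
    rewrite /S /inner -(vsum0 m); apply vsum_ext => i; rewrite hu; ring.
  rewrite Rmult_0_r; apply pow2_ge_0.
have HP : 0 < P by lra.
have Hn : normp p u ^ 2 = Rpower P (/ q).
  rewrite /normp -/t -/P rpow_pos // /= Rmult_1_r -Rpower_plus; f_equal; rewrite /q; field; lra.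
rewrite Hn.
case: (Rle_lt_dec q 1) => Hq1.
  have Hiq : 1 <= / q.
    rewrite -Rinv_1; apply Rinv_le_contravar => //.
  have hw : forall i, u i * u i <= t i * Rpower P (/ q - 1).
    move=> i; case: (Req_dec (u i) 0) => Hi.
      rewrite Hi ht0 //; lra.
    have Hw : 0 < u i * u i by nra.
    have Ht : 0 < t i by rewrite ht //; apply Rpower_pos.
    have e1 : u i * u i = Rpower (t i) (/ q).
      rewrite ht // Rpower_mult Rinv_r ?Rpower_1 //; lra.
    have e2 : Rpower (t i) (/ q) = t i * Rpower (t i) (/ q - 1).
      rewrite -{2}(Rpower_1 (t i) Ht) -Rpower_plus; f_equal; ring.
    rewrite e1 e2; apply Rmult_le_compat_l; first lra.
    apply Rle_Rpower_l; first lra.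
    split => //; apply vsum_term_le => //.
  have : S <= P * Rpower P (/ q - 1).
    rewrite /S /inner Rmult_comm -vsumZ; apply vsum_le => i.
    by rewrite Rmult_comm; apply hw.
  have -> : P * Rpower P (/ q - 1) = Rpower P (/ q).
    rewrite -{1}(Rpower_1 P HP) -Rpower_plus; f_equal; ring.
  have : sig * S <= 1 * S by apply Rmult_le_compat_r.
  lra.
case: (Req_dec S 0) => HS0.
  rewrite HS0 Rmult_0_r; apply Rlt_le, Rpower_pos.
have HS : 0 < S by lra.
have Hm' : 0 < INR m.
  apply lt_0_INR; case: (Nat.eq_dec m 0) => E; last lia.
  subst m; move: HS; rewrite /S /inner /vsum big_ord0; lra.
set M := S / INR m.
have HM : 0 < M by apply Rdiv_lt_0_compat.
have hP : INR m * Rpower M q <= P.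
  have : vsum (fun i => Rpower M q + q * Rpower M (q - 1) * (u i * u i - M)) <= P.
    apply vsum_le => i.
    have h0 : 0 <= u i * u i by nra.
    have h1 : 1 <= q by lra.
    have := tangent HM h0 h1.
    case: (Req_dec (u i) 0) => Hi.
      rewrite /t Hi Rabs_R0 Rmult_0_l rpow_0 rpow_0; lra.
    rewrite rpow_pos; last by nra.
    by rewrite -ht.
  have -> : vsum (fun i => Rpower M q + q * Rpower M (q - 1) * (u i * u i - M))
          = vsum (fun i => (Rpower M q - q * Rpower M (q - 1) * M) + q * Rpower M (q - 1) * (u i * u i)).
    by apply vsum_ext => i; ring.
  rewrite vsumD vsum_const vsumZ -/(inner u u) -/S.
  have -> : S = INR m * M by rewrite /M; field; lra.
  lra.
have : Rpower (INR m * Rpower M q) (/ q) <= Rpower P (/ q).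
  apply Rle_Rpower_l; first by apply Rlt_le, Rinv_0_lt_compat.
  split => //; apply Rmult_lt_0_compat => //; apply Rpower_pos.
rewrite -Rpower_mult_distr //; last by apply Rpower_pos.
rewrite Rpower_mult Rinv_r ?Rpower_1 //; last lra.
have -> : Rpower (INR m) (/ q) * M = Rpower (INR m) (2 / p - 1) * S.
  have -> : 2 / p - 1 = / q + (- 1) by rewrite /q; field; lra.
  rewrite Rpower_plus Rpower_Ropp Rpower_1 // /M; field; lra.
have : sig * S <= Rpower (INR m) (2 / p - 1) * S by apply Rmult_le_compat_r; lra.
lra.
Qed.


Lemma vec_ext n (u v : vec n) : (forall i, u i = v i) -> u = v.
Proof. move=> H; apply functional_extensionality => i; apply H. Qed.

Section Inner.
Variable n : nat.
Implicit Types u v w : vec n.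
Lemma inner_sym u v : inner u v = inner v u.
Proof. by apply vsum_ext => i; ring. Qed.
Lemma inner_addl u v w : inner (vadd u v) w = inner u w + inner v w.
Proof. rewrite /inner -vsumD; apply vsum_ext => i; rewrite /vadd; ring. Qed.
Lemma inner_addr u v w : inner w (vadd u v) = inner w u + inner w v.
Proof. rewrite /inner -vsumD; apply vsum_ext => i; rewrite /vadd; ring. Qed.
Lemma inner_subl u v w : inner (vsub u v) w = inner u w - inner v w.
Proof.
rewrite /inner; have -> : forall a b : R, a - b = a + (-1) * b by move=> *; ring.
rewrite -vsumZ -vsumD; apply vsum_ext => i; rewrite /vsub; ring.
Qed.
Lemma inner_subr u v w : inner w (vsub u v) = inner w u - inner w v.
Proof. by rewrite inner_sym inner_subl (inner_sym u) (inner_sym v). Qed.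
Lemma inner_scall a u w : inner (vscal a u) w = a * inner u w.
Proof. rewrite /inner -vsumZ; apply vsum_ext => i; rewrite /vscal; ring. Qed.
Lemma inner_scalr a u w : inner w (vscal a u) = a * inner w u.
Proof. rewrite /inner -vsumZ; apply vsum_ext => i; rewrite /vscal; ring. Qed.
Lemma inner_oppl u w : inner (vopp u) w = - inner u w.
Proof.
rewrite /inner; have -> : forall a : R, - a = (-1) * a by move=> *; ring.
rewrite -vsumZ; apply vsum_ext => i; rewrite /vopp; ring.
Qed.
Lemma inner_zero_r u w : (forall i, w i = 0) -> inner u w = 0.
Proof. move=> H; rewrite /inner -(vsum0 n); apply vsum_ext => i; rewrite H; ring. Qed.
Lemma inner_self_ge0 u : 0 <= inner u u.
Proof. apply vsum_ge0 => i; nra. Qed.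
Lemma norm2_sq u : norm2 u ^ 2 = inner u u.
Proof. rewrite /norm2 /= Rmult_1_r sqrt_sqrt //; apply inner_self_ge0. Qed.
End Inner.

Lemma inner_mtv m n (A : mat m n) (y : vec m) (x : vec n) :
  inner (mtv A y) x = inner y (mv A x).
Proof.
rewrite /inner /mtv /mv.
transitivity (vsum (fun j => vsum (fun i => A i j * y i * x j))).
  by apply vsum_ext => j; rewrite Rmult_comm -vsumZ; apply vsum_ext => i; ring.
rewrite -vsum_swap; apply vsum_ext => i; rewrite -vsumZ; apply vsum_ext => j; ring.
Qed.

Lemma mv_add m n (A : mat m n) u v : mv A (vadd u v) = vadd (mv A u) (mv A v).
Proof. apply vec_ext => i; rewrite /mv /vadd -vsumD; apply vsum_ext => j; ring. Qed.
Lemma mv_sub m n (A : mat m n) u v : mv A (vsub u v) = vsub (mv A u) (mv A v).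
Proof.
apply vec_ext => i; rewrite /mv /vsub.
have -> : forall a b : R, a - b = a + (-1) * b by move=> *; ring.
rewrite -vsumZ -vsumD; apply vsum_ext => j; ring.
Qed.
Lemma mv_scal m n (A : mat m n) a u : mv A (vscal a u) = vscal a (mv A u).
Proof. apply vec_ext => i; rewrite /mv /vscal -vsumZ; apply vsum_ext => j; ring. Qed.

Lemma breg_ge0 n (C D : vec n -> Prop) psi gpsi u v :
  bregman_generator C D psi gpsi -> C u -> D v -> 0 <= breg psi gpsi u v.
Proof.
move=> [_ [_ [HDC [Hsc [Hder _]]]]] Cu Dv.
case: (Rle_lt_dec 0 (breg psi gpsi u v)) => // Hneg; exfalso.
have Huv : u <> v.
  move=> E; move: Hneg; rewrite /breg E inner_zero_r; first lra.
  by move=> i; rewrite /vsub; ring.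
set eps := - breg psi gpsi u v.
have Heps : eps > 0 by rewrite /eps; lra.
have [del [Hdel Hd]] := Hder v u eps Dv Cu Heps.
set h := Rmin (del / 2) (1 / 2).
have Hh0 : 0 < h by apply Rmin_glb_lt; lra.
have Hh1 : h <= del / 2 by apply Rmin_l.
have Hh2 : h <= 1 / 2 by apply Rmin_r.
have Hhd : h < del by lra.
have := Hd h (conj Hh0 Hhd).
have Eh : vadd v (vscal h (vsub u v)) = vadd (vscal h u) (vscal (1 - h) v).
  by apply vec_ext => i; rewrite /vadd /vscal /vsub; ring.
rewrite Eh.
have Hh3 : h < 1 by lra.
have := Hsc u v h Cu (HDC v Dv) Huv (conj Hh0 Hh3).
set V := psi (vadd _ _) => Hc Hab.
have Hq : (V - psi v) / h < psi u - psi v.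
  apply (Rmult_lt_reg_r h) => //; rewrite /Rdiv Rmult_assoc Rinv_l; lra.
move: Hab Hneg; rewrite /eps /breg; move: Hq.
set Q := (V - psi v) / h; set I := inner _ _.
move=> Hq /Rabs_def2 [H1 H2]; lra.
Qed.


Definition nsum (a : nat -> R) (T : nat) : R := \big[Rplus/0]_(1 <= t < T.+1) a t.

Lemma nsum0 a : nsum a 0 = 0.
Proof. by rewrite /nsum big_geq. Qed.
Lemma nsumS a T : nsum a T.+1 = nsum a T + a T.+1.
Proof. by rewrite /nsum big_nat_recr. Qed.

Lemma tsum_nsum n (x : nat -> vec n) T i : tsum x T i = nsum (fun t => x t i) T.
Proof. by []. Qed.

Lemma jensen n (F : vec n -> ereal) (u : nat -> vec n) (val : nat -> R) T :
  econvex F -> (forall t, (1 <= t <= T)%nat -> F (u t) = Fin (val t)) -> (1 <= T)%nat ->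
  exists b, F (tavg u T) = Fin b /\ b <= nsum val T / INR T.
Proof.
move=> Hc; elim: T => [|T IH] Hv HT; first by [].
case: (posnP T) => HT0.
  subst T; exists (val 1%nat); split.
    have -> : tavg u 1 = u 1%nat.
      apply vec_ext => i; rewrite /tavg /vscal tsum_nsum nsumS nsum0 /=; field.
    by apply Hv.
  by rewrite nsumS nsum0 /= /Rdiv Rinv_1; lra.
have [b [Hb Hbs]] : exists b, F (tavg u T) = Fin b /\ b <= nsum val T / INR T.
  apply IH => // t /andP [h1 h2]; apply Hv; apply/andP; split => //; exact: leqW.
have HTr : 0 < INR T by apply lt_0_INR; apply/ltP.
set l := / INR T.+1.
have HT1 : INR T.+1 = INR T + 1 by rewrite S_INR.
have Hl : 0 <= l <= 1.
  rewrite /l HT1; split; first by apply Rlt_le, Rinv_0_lt_compat; lra.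
  rewrite -Rinv_1; apply Rinv_le_contravar; lra.
have E : tavg u T.+1 = vadd (vscal l (u T.+1)) (vscal (1 - l) (tavg u T)).
  apply vec_ext => i; rewrite /tavg /vadd /vscal !tsum_nsum nsumS /l HT1; field; lra.
have Hu : F (u T.+1) = Fin (val T.+1) by apply Hv; apply/andP; split => //.
have := Hc _ _ _ _ _ Hu Hb Hl; rewrite -E.
case: (F (tavg u T.+1)) => [r|] Hr //; exists r; split => //; rewrite /ele in Hr.
rewrite nsumS HT1.
have : (1 - l) * b <= (1 - l) * (nsum val T / INR T) by apply Rmult_le_compat_l; lra.
have -> : (1 - l) * (nsum val T / INR T) = nsum val T / (INR T + 1).
  rewrite /l HT1; field; lra.
have -> : (nsum val T + val T.+1) / (INR T + 1) = nsum val T / (INR T + 1) + l * val T.+1.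
  rewrite /l HT1; field; lra.
lra.
Qed.

Definition Fsq n (u : vec n) : ereal := Fin (inner u u).

Lemma Fsq_convex n : econvex (@Fsq n).
Proof.
move=> u v a b l [<-] [<-] Hl /=.
rewrite !inner_addl !inner_addr !inner_scall !inner_scalr (inner_sym v u).
have := inner_self_ge0 (vsub u v).
rewrite !inner_subl !inner_subr (inner_sym v u) => H.
have : 0 <= l * (1 - l) by nra.
nra.
Qed.


Lemma quad_exp n (d r : vec n) t :
  inner (vsub d (vscal t r)) (vsub d (vscal t r)) = inner d d - 2 * t * inner d r + t ^ 2 * inner r r.
Proof.
rewrite inner_subl !inner_subr !inner_scall !inner_scalr (inner_sym r d); ring.
Qed.

Lemma step n1 n2 m (A : mat m n1) (B : mat m n2) (c : vec m)
  (phi : vec m -> R) gphi (phx : vec n1 -> R) gphx (phz : vec n2 -> R) gphz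
  rho tau rhox rhoz alpha p gamma
  (xt x1 xs : vec n1) (zt z1 zs : vec n2) (yt y1 y' : vec m) a1 b1 fs gs :
  let a := vsub c (mv A x1) in
  let r1 := vsub (vadd (mv A x1) (mv B z1)) c in
  let sx := vsub (vopp (mtv A (vadd yt (vscal rho (vsub (gphi (mv B zt)) (gphi a))))))
                 (vscal rhox (vsub (gphx x1) (gphx xt))) in
  let sz := vsub (vopp (mtv B (vadd yt (vscal rho (vsub (gphi (mv B z1)) (gphi a))))))
                 (vscal rhoz (vsub (gphz z1) (gphz zt))) in
  a1 + inner sx (vsub xs x1) <= fs ->
  b1 + inner sz (vsub zs z1) <= gs ->
  y1 = vadd yt (vscal tau r1) ->
  vadd (mv A xs) (mv B zs) = c ->
  breg phi gphi (mv B z1) a >= alpha / 2 * normp p (vsub (mv B z1) a) ^ 2 ->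
  0 <= breg phi gphi a (mv B zt) ->
  0 <= breg phx gphx x1 xt -> 0 <= breg phz gphz z1 zt ->
  rho > 0 -> tau > 0 -> rhox >= 0 -> rhoz >= 0 -> alpha > 0 -> p > 0 ->
  tau <= (alpha * Rmin 1 (Rpower (INR m) (2 / p - 1)) - 2 * gamma) * rho ->
  (a1 + b1 - (fs + gs)) + inner y' r1 + gamma * rho * inner r1 r1 <=
   (/ (2 * tau) * inner (vsub y' yt) (vsub y' yt) + rho * breg phi gphi (mv B zs) (mv B zt)
    + rhox * breg phx gphx xs xt + rhoz * breg phz gphz zs zt)
 - (/ (2 * tau) * inner (vsub y' y1) (vsub y' y1) + rho * breg phi gphi (mv B zs) (mv B z1)
    + rhox * breg phx gphx xs x1 + rhoz * breg phz gphz zs z1).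
Proof.
move=> a r1 sx sz H1 H2 Hy Hc Bn Bab Bx Bz Hrho Htau Hrhox Hrhoz Hal Hp Htl.
set b1v := mv B z1; set bs := mv B zs; set b := mv B zt.
have Hax : mv A (vsub xs x1) = vsub a bs.
  rewrite mv_sub; apply vec_ext => i; rewrite /a /bs /vsub -Hc /vadd; ring.
have Hbz : mv B (vsub zs z1) = vsub bs b1v by rewrite mv_sub.
have Hr1 : r1 = vsub b1v a.
  by apply vec_ext => i; rewrite /r1 /b1v /a /vsub /vadd; ring.
have Ex : inner sx (vsub xs x1) = - inner (vadd yt (vscal rho (vsub (gphi b) (gphi a)))) (vsub a bs)
          - rhox * inner (vsub (gphx x1) (gphx xt)) (vsub xs x1).
  by rewrite /sx inner_subl inner_oppl inner_mtv Hax inner_scall.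
have Ez : inner sz (vsub zs z1) = - inner (vadd yt (vscal rho (vsub (gphi b1v) (gphi a)))) (vsub bs b1v)
          - rhoz * inner (vsub (gphz z1) (gphz zt)) (vsub zs z1).
  by rewrite /sz inner_subl inner_oppl inner_mtv Hbz inner_scall.
have ID : - inner sx (vsub xs x1) - inner sz (vsub zs z1) + inner y' r1 =
   inner (vsub y' yt) r1
   + rho * (breg phi gphi bs b - breg phi gphi bs b1v - breg phi gphi a b - breg phi gphi b1v a)
   + rhox * (breg phx gphx xs xt - breg phx gphx xs x1 - breg phx gphx x1 xt)
   + rhoz * (breg phz gphz zs zt - breg phz gphz zs z1 - breg phz gphz z1 zt).
  rewrite Ex Ez Hr1 /breg.
  rewrite ?inner_subl ?inner_subr ?inner_scall ?inner_scalr ?inner_subl ?inner_subr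
          ?inner_addl ?inner_addr ?inner_subl ?inner_subr ?inner_scall ?inner_scalr
          ?inner_subl ?inner_subr ?inner_addl ?inner_addr.
  ring.
have Hq : inner (vsub y' y1) (vsub y' y1) =
   inner (vsub y' yt) (vsub y' yt) - 2 * tau * inner (vsub y' yt) r1 + tau ^ 2 * inner r1 r1.
  have -> : vsub y' y1 = vsub (vsub y' yt) (vscal tau r1).
    by rewrite Hy; apply vec_ext => i; rewrite /vsub /vadd /vscal; ring.
  by rewrite quad_exp.
set sig := Rmin 1 (Rpower (INR m) (2 / p - 1)) in Htl.
have Hn := normp_ge (vsub b1v a) Hp.
rewrite -/sig -Hr1 in Hn.
set R := inner r1 r1 in Hq Hn *.
have HR : 0 <= R by apply inner_self_ge0.
set Q0 := inner (vsub y' yt) (vsub y' yt) in Hq *.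
set Q1 := inner (vsub y' y1) (vsub y' y1) in Hq *.
set X := inner (vsub y' yt) r1 in Hq ID *.
have HX : X = / (2 * tau) * (Q0 - Q1) + tau / 2 * R.
  rewrite Hq; field; lra.
rewrite HX in ID.
have hb1 : rho * (alpha / 2 * (sig * R)) <= rho * breg phi gphi b1v a.
  apply Rmult_le_compat_l; first lra.
  have : alpha / 2 * (sig * R) <= alpha / 2 * normp p r1 ^ 2.
    apply Rmult_le_compat_l; lra.
  move: Bn; rewrite -/b1v -Hr1 => h1 h2; apply Rge_le in h1; exact: Rle_trans h2 h1.
have hb2 : 0 <= rho * breg phi gphi a b by apply Rmult_le_pos; [lra | exact Bab].
have hb3 : 0 <= rhox * breg phx gphx x1 xt by apply Rmult_le_pos; lra.
have hb4 : 0 <= rhoz * breg phz gphz z1 zt by apply Rmult_le_pos; lra.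
have hq : (tau - (alpha * sig - 2 * gamma) * rho) * R <= 0.
  have : 0 <= ((alpha * sig - 2 * gamma) * rho - tau) * R by apply Rmult_le_pos; lra.
  nra.
have e1 : rho * (alpha / 2 * (sig * R)) = alpha * sig * rho * R / 2 by field.
rewrite e1 in hb1.
nra.
Qed.


Lemma nsumD (a b : nat -> R) T : nsum (fun t => a t + b t) T = nsum a T + nsum b T.
Proof. elim: T => [|T IH]; rewrite ?nsum0 ?nsumS ?IH; ring. Qed.
Lemma nsumZ k (a : nat -> R) T : nsum (fun t => k * a t) T = k * nsum a T.
Proof. elim: T => [|T IH]; rewrite ?nsum0 ?nsumS ?IH; ring. Qed.
Lemma nsum_const k T : nsum (fun _ => k) T = INR T * k.
Proof. elim: T => [|T IH]; rewrite ?nsum0 ?nsumS ?IH ?S_INR /=; ring. Qed.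
Lemma nsum_le (a b : nat -> R) T : (forall t, a t <= b t) -> nsum a T <= nsum b T.
Proof. move=> H; elim: T => [|T IH]; rewrite ?nsum0 ?nsumS; [lra | have := H T.+1; lra]. Qed.
Lemma nsum_le_in (a b : nat -> R) T : (forall t, (1 <= t <= T)%nat -> a t <= b t) -> nsum a T <= nsum b T.
Proof.
elim: T => [|T IH] H; rewrite ?nsum0 ?nsumS; first lra.
have h1 : nsum a T <= nsum b T.
  apply IH => t /andP [h1 h2]; apply H; apply/andP; split => //; exact: leqW.
have h2 : a T.+1 <= b T.+1 by apply H; apply/andP; split.
lra.
Qed.
Lemma nsum_ge0 (a : nat -> R) T : (forall t, 0 <= a t) -> 0 <= nsum a T.
Proof. move=> H; elim: T => [|T IH]; rewrite ?nsum0 ?nsumS; [lra | have := H T.+1; lra]. Qed.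
Lemma nsum_vsum n (F : nat -> 'I_n -> R) T :
  nsum (fun t => vsum (F t)) T = vsum (fun j => nsum (fun t => F t j) T).
Proof.
elim: T => [|T IH].
  rewrite nsum0 -(vsum0 n); apply vsum_ext => j; by rewrite nsum0.
rewrite nsumS IH -vsumD; apply vsum_ext => j; by rewrite nsumS.
Qed.

Lemma mv_tavg m n (A : mat m n) (x : nat -> vec n) T :
  mv A (tavg x T) = tavg (fun t => mv A (x t)) T.
Proof.
apply vec_ext => i; rewrite /tavg /vscal tsum_nsum /mv nsum_vsum -vsumZ.
apply vsum_ext => j; rewrite tsum_nsum nsumZ; ring.
Qed.

Unset Implicit Arguments.

Theorem theorem2
  (n1 n2 m : nat)
  (f : vec n1 -> ereal) (g : vec n2 -> ereal)
  (A : mat m n1) (B : mat m n2) (c : vec m)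
  (X : vec n1 -> Prop) (Z : vec n2 -> Prop)
  (Cphi Dphi : vec m -> Prop) (phi : vec m -> R) (gphi : vec m -> vec m)
  (Cx Dx : vec n1 -> Prop) (phx : vec n1 -> R) (gphx : vec n1 -> vec n1)
  (Cz Dz : vec n2 -> Prop) (phz : vec n2 -> R) (gphz : vec n2 -> vec n2)
  (rho tau rhox rhoz alpha p gamma : R)
  (x : nat -> vec n1) (z : nat -> vec n2) (y : nat -> vec m)
  (* problem data *)
  (HX : convex_set X) (HZ : convex_set Z)
  (Hphi : bregman_generator Cphi Dphi phi gphi)
  (Hphx : bregman_generator Cx Dx phx gphx)
  (Hphz : bregman_generator Cz Dz phz gphz)
  (* parameters *)
  (Hrho : rho > 0) (Htau : tau > 0) (Hrhox : rhox >= 0) (Hrhoz : rhoz >= 0)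
  (* Assumption 1(a) *)
  (Hf : econvex f /\ eproper f /\ eclosed f)
  (Hg : econvex g /\ eproper g /\ eclosed g)
  (* Assumption 1(b) *)
  (Hopt : exists xo zo, X xo /\ Z zo /\ vadd (mv A xo) (mv B zo) = c /\
     forall x' z', X x' -> Z z' -> vadd (mv A x') (mv B z') = c ->
       ele (eadd (f xo) (g zo)) (eadd (f x') (g z')))
  (* Assumption 1(c) *)
  (Halpha : alpha > 0) (Hp : p > 0)
  (Hstrong : forall u v, Cphi u -> Dphi v ->
     breg phi gphi u v >= alpha / 2 * (normp p (vsub u v)) ^ 2)
  (* standing assumption: Bregman divergences evaluated where defined *)
  (Hdom : forall t, Dphi (mv B (z t)) /\ Dphi (vsub c (mv A (x (S t)))) /\
                    Dx (x t) /\ Dz (z t))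
  (* generalized Bregman ADMM iterations *)
  (Hy0 : y 0%nat = vzero m)
  (Hxstep : forall t, X (x (S t)) /\ Cphi (vsub c (mv A (x (S t)))) /\ Cx (x (S t)) /\
     forall x', X x' -> Cphi (vsub c (mv A x')) -> Cx x' ->
       ele (admm_x_obj f A B c phi gphi phx gphx rho rhox (x t) (z t) (y t) (x (S t)))
           (admm_x_obj f A B c phi gphi phx gphx rho rhox (x t) (z t) (y t) x'))
  (Hzstep : forall t, Z (z (S t)) /\ Cphi (mv B (z (S t))) /\ Cz (z (S t)) /\
     forall z', Z z' -> Cphi (mv B z') -> Cz z' ->
       ele (admm_z_obj g A B c phi gphi phz gphz rho rhoz (x (S t)) (z t) (y t) (z (S t)))
           (admm_z_obj g A B c phi gphi phz gphz rho rhoz (x (S t)) (z t) (y t) z'))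
  (Hystep : forall t, y (S t) =
     vadd (y t) (vscal tau (vsub (vadd (mv A (x (S t))) (mv B (z (S t)))) c)))
  (* standing assumption: first-order optimality conditions *)
  (Hfoc_x : forall t, subgrad f (x (S t))
     (vsub (vopp (mtv A (vadd (y t)
              (vscal rho (vsub (gphi (mv B (z t))) (gphi (vsub c (mv A (x (S t))))))))))
           (vscal rhox (vsub (gphx (x (S t))) (gphx (x t))))))
  (Hfoc_z : forall t, subgrad g (z (S t))
     (vsub (vopp (mtv B (vadd (y t)
              (vscal rho (vsub (gphi (mv B (z (S t)))) (gphi (vsub c (mv A (x (S t))))))))))
           (vscal rhoz (vsub (gphz (z (S t))) (gphz (z t))))))
  (* step-size conditions *)
  (Hgamma : 0 < gamma < alpha * Rmin 1 (Rpower (INR m) (2 / p - 1)) / 2)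
  (Htau_le : tau <= (alpha * Rmin 1 (Rpower (INR m) (2 / p - 1)) - 2 * gamma) * rho)
  (* a KKT point *)
  (xs : vec n1) (zs : vec n2) (ys : vec m)
  (Hkkt_f : subgrad f xs (vopp (mtv A ys)))
  (Hkkt_g : subgrad g zs (vopp (mtv B ys)))
  (Hkkt_c : vadd (mv A xs) (mv B zs) = c)
  (Hkkt_dom : Cx xs /\ Cz zs /\ Cphi (mv B zs))
  (T : nat) (HT : (1 <= T)%nat) :
  (exists a b a' b',
     f (tavg x T) = Fin a /\ g (tavg z T) = Fin b /\
     f xs = Fin a' /\ g zs = Fin b' /\
     a + b - (a' + b') <=
       (rho * breg phi gphi (mv B zs) (mv B (z 0%nat))
        + rhox * breg phx gphx xs (x 0%nat)
        + rhoz * breg phz gphz zs (z 0%nat)) / INR T)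
  /\
  (norm2 (vsub (vadd (mv A (tavg x T)) (mv B (tavg z T))) c)) ^ 2 <=
    (/ (2 * tau * rho) * (norm2 (vsub ys (y 0%nat))) ^ 2
     + breg phi gphi (mv B zs) (mv B (z 0%nat))
     + rhox / rho * breg phx gphx xs (x 0%nat)
     + rhoz / rho * breg phz gphz zs (z 0%nat)) / (gamma * INR T).
Proof.
have [Hfc _] := Hf. have [Hgc _] := Hg.
have [fs [Hfs Hfsv]] := Hkkt_f.
have [gs [Hgs Hgsv]] := Hkkt_g.
have [Cxs [Czs CBzs]] := Hkkt_dom.
set r := fun t => vsub (vadd (mv A (x t)) (mv B (z t))) c.
set fa := fun t => match f (x t) with Fin a => a | PInf => 0 end.
set gb := fun t => match g (z t) with Fin a => a | PInf => 0 end.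
have Hfa : forall t, f (x t.+1) = Fin (fa t.+1) /\
   fa t.+1 + inner (vsub (vopp (mtv A (vadd (y t)
              (vscal rho (vsub (gphi (mv B (z t))) (gphi (vsub c (mv A (x (S t))))))))))
           (vscal rhox (vsub (gphx (x (S t))) (gphx (x t))))) (vsub xs (x t.+1)) <= fs.
  move=> t; have [a [Ha Hv]] := Hfoc_x t.
  have Efa : fa t.+1 = a by rewrite /fa Ha.
  rewrite Efa; split => //; have := Hv xs; by rewrite Hfs.
have Hgb : forall t, g (z t.+1) = Fin (gb t.+1) /\
   gb t.+1 + inner (vsub (vopp (mtv B (vadd (y t)
              (vscal rho (vsub (gphi (mv B (z (S t)))) (gphi (vsub c (mv A (x (S t))))))))))
           (vscal rhoz (vsub (gphz (z (S t))) (gphz (z t))))) (vsub zs (z t.+1)) <= gs.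
  move=> t; have [a [Ha Hv]] := Hfoc_z t.
  have Egb : gb t.+1 = a by rewrite /gb Ha.
  rewrite Egb; split => //; have := Hv zs; by rewrite Hgs.
set Phi := fun t (y' : vec m) =>
  / (2 * tau) * inner (vsub y' (y t)) (vsub y' (y t)) + rho * breg phi gphi (mv B zs) (mv B (z t))
    + rhox * breg phx gphx xs (x t) + rhoz * breg phz gphz zs (z t).
set L := fun (y' : vec m) s =>
  (fa s + gb s - (fs + gs)) + inner y' (r s) + gamma * rho * inner (r s) (r s).
have Hstep : forall t y', L y' t.+1 <= Phi t y' - Phi t.+1 y'.
  move=> t y'; rewrite /L /Phi /r.
  have [Xs1 [CX1 [Cx1 _]]] := Hxstep t.
  have [Zs1 [CZ1 [Cz1 _]]] := Hzstep t.
  have [Dz0 [Da [Dx0 Dz0']]] := Hdom t.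
  have [Dz1 [_ [Dx1 Dz1']]] := Hdom t.+1.
  have Bab : 0 <= breg phi gphi (vsub c (mv A (x t.+1))) (mv B (z t)).
    have := Hstrong _ _ CX1 Dz0.
    have : 0 <= alpha / 2 * normp p (vsub (vsub c (mv A (x t.+1))) (mv B (z t))) ^ 2.
      apply Rmult_le_pos; [lra | apply pow2_ge_0].
    lra.
  have HH := (step (a1 := fa t.+1) (b1 := gb t.+1) y' (proj2 (Hfa t)) (proj2 (Hgb t)) (Hystep t) Hkkt_c
     (Hstrong _ _ CZ1 Da) Bab (breg_ge0 _ _ Hphx Cx1 Dx0) (breg_ge0 _ _ Hphz Cz1 Dz0')
     Hrho Htau Hrhox Hrhoz Halpha Hp Htau_le).
  exact HH.
have Htele : forall T' y', nsum (L y') T' <= Phi 0%nat y' - Phi T' y'.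
  move=> T' y'; elim: T' => [|T' IH]; first by rewrite nsum0; lra.
  rewrite nsumS; have := Hstep T' y'; lra.
have Phi_ge0 : forall t y', 0 <= Phi t y'.
  move=> t y'; rewrite /Phi.
  have [Dzt [_ [Dxt Dzt']]] := Hdom t.
  have h1 : 0 <= / (2 * tau) * inner (vsub y' (y t)) (vsub y' (y t)).
    apply Rmult_le_pos; [apply Rlt_le, Rinv_0_lt_compat; lra | apply inner_self_ge0].
  have h2 : 0 <= rho * breg phi gphi (mv B zs) (mv B (z t)).
    apply Rmult_le_pos; first lra.
    have := Hstrong _ _ CBzs Dzt.
    have : 0 <= alpha / 2 * normp p (vsub (mv B zs) (mv B (z t))) ^ 2.
      apply Rmult_le_pos; [lra | apply pow2_ge_0].
    lra.
  have h3 : 0 <= rhox * breg phx gphx xs (x t) by apply Rmult_le_pos; [lra | apply: breg_ge0 _ _ Hphx Cxs Dxt].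
  have h4 : 0 <= rhoz * breg phz gphz zs (z t) by apply Rmult_le_pos; [lra | apply: breg_ge0 _ _ Hphz Czs Dzt'].
  lra.
have HTr : 0 < INR T by apply lt_0_INR; apply/ltP.
have Hf1 : forall t, (1 <= t <= T)%nat -> f (x t) = Fin (fa t).
  by move=> [|t] // _; apply (Hfa t).
have Hg1 : forall t, (1 <= t <= T)%nat -> g (z t) = Fin (gb t).
  by move=> [|t] // _; apply (Hgb t).
split.
  have [a [Ha Hale]] := @jensen _ f x fa T Hfc Hf1 HT.
  have [b [Hb Hble]] := @jensen _ g z gb T Hgc Hg1 HT.
  exists a, b, fs, gs; do 4 split => //.
  have HL := Htele T (vzero m).
  have HP := Phi_ge0 T (vzero m).
  have E0 : Phi 0%nat (vzero m) = rho * breg phi gphi (mv B zs) (mv B (z 0%nat))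
        + rhox * breg phx gphx xs (x 0%nat) + rhoz * breg phz gphz zs (z 0%nat).
    rewrite /Phi Hy0 inner_zero_r; last by move=> i; rewrite /vsub /vzero; ring.
    ring.
  have Hobj : nsum (fun s => fa s + gb s - (fs + gs)) T <= nsum (L (vzero m)) T.
    apply nsum_le => s; rewrite /L (inner_sym (vzero m)) inner_zero_r //.
    have := inner_self_ge0 (r s).
    have : 0 <= gamma * rho by apply Rmult_le_pos; lra.
    nra.
  have Eo : nsum (fun s => fa s + gb s - (fs + gs)) T = nsum fa T + nsum gb T - INR T * (fs + gs).
    transitivity (nsum (fun s => (fa s + gb s) + (-1) * (fs + gs)) T).
      by apply: eq_bigr => s _; ring.
    by rewrite nsumD nsumZ nsumD nsum_const; ring.
  rewrite Eo in Hobj.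
  set D1 := rho * _ + _ + _ in E0 *.
  have K : nsum fa T + nsum gb T - INR T * (fs + gs) <= D1 by lra.
  have : a + b - (fs + gs) <= (nsum fa T + nsum gb T - INR T * (fs + gs)) / INR T.
    have -> : (nsum fa T + nsum gb T - INR T * (fs + gs)) / INR T
           = nsum fa T / INR T + nsum gb T / INR T - (fs + gs) by field; lra.
    lra.
  have : (nsum fa T + nsum gb T - INR T * (fs + gs)) / INR T <= D1 / INR T.
    apply Rmult_le_compat_r => //; apply Rlt_le, Rinv_0_lt_compat; lra.
  lra.
have HL := Htele T ys.
have HP := Phi_ge0 T ys.
have Hkkt_s : forall s, (1 <= s <= T)%nat -> 0 <= fa s + gb s - (fs + gs) + inner ys (r s).
  move=> s Hs.
  have := Hfsv (x s); rewrite (Hf1 s Hs) /=.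
  have := Hgsv (z s); rewrite (Hg1 s Hs) /=.
  rewrite !inner_oppl !inner_mtv.
  have : inner ys (mv A (vsub (x s) xs)) + inner ys (mv B (vsub (z s) zs)) = inner ys (r s).
    rewrite -inner_addr; congr inner; apply vec_ext => i.
    rewrite !mv_sub /r /vadd /vsub -Hkkt_c /vadd; ring.
  lra.
have Hres : gamma * rho * nsum (fun s => inner (r s) (r s)) T <= Phi 0%nat ys.
  rewrite -nsumZ.
  have : nsum (fun s => gamma * rho * inner (r s) (r s)) T <= nsum (L ys) T.
    apply nsum_le_in => s Hs; rewrite /L.
    have := Hkkt_s s Hs; lra.
  lra.
have Hr1 : forall t, (1 <= t <= T)%nat -> Fsq (r t) = Fin (inner (r t) (r t)) by [].
have [b [Hb Hble]] := @jensen _ (@Fsq m) r (fun t => inner (r t) (r t)) T (@Fsq_convex m) Hr1 HT.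
have Er : tavg r T = vsub (vadd (mv A (tavg x T)) (mv B (tavg z T))) c.
  rewrite !mv_tavg; apply vec_ext => i.
  rewrite /tavg /vscal /vsub /vadd !tsum_nsum /r.
  have -> : nsum (fun t => mv A (x t) i + mv B (z t) i - c i) T
      = nsum (fun t => mv A (x t) i) T + nsum (fun t => mv B (z t) i) T + (-1) * nsum (fun _ => c i) T.
    rewrite -nsumZ -!nsumD; apply: eq_bigr => t _; ring.
  rewrite nsum_const; field; lra.
rewrite !norm2_sq -Er.
have Eb : inner (tavg r T) (tavg r T) = b by move: Hb; rewrite /Fsq => -[].
rewrite -Eb in Hble.
have Hg0 : 0 < gamma by lra.
have E1 : Phi 0%nat ys = rho * (/ (2 * tau * rho) * inner (vsub ys (y 0%nat)) (vsub ys (y 0%nat))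
     + breg phi gphi (mv B zs) (mv B (z 0%nat))
     + rhox / rho * breg phx gphx xs (x 0%nat) + rhoz / rho * breg phz gphz zs (z 0%nat)).
  rewrite /Phi; field; lra.
set DD := (/ (2 * tau * rho) * _ + _ + _ + _) in E1 *.
have H2 : nsum (fun s => inner (r s) (r s)) T <= DD / gamma.
  apply (Rmult_le_reg_l (gamma * rho)); first by apply Rmult_lt_0_compat; lra.
  have -> : gamma * rho * (DD / gamma) = rho * DD by field; lra.
  lra.
have : nsum (fun s => inner (r s) (r s)) T / INR T <= DD / gamma / INR T.
  apply Rmult_le_compat_r => //; apply Rlt_le, Rinv_0_lt_compat; lra.
have -> : DD / gamma / INR T = DD / (gamma * INR T) by field; lra.
lra.
Qed.
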